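(* Let $G$ be a bipartite graph with $\mathrm{Ind}(G)$ Cohen-Macaulay, let $X=\{x_1,\ldots,x_n\}$, $Y=\{y_1,\ldots,y_n\}$, $Z=\{z_1,\ldots,z_m\}$ be any tri-partition of its vertices as below, and let $\check G$ be the corresponding compression. Then $h_j(\mathrm{Ind}(G))=f_{j-1}(\mathrm{Ind}(\check G))$ for all $0\le j\le n+m$, where $f_{j-1}(\mathrm{Ind}(\check G))$ denotes the number of independent sets of size $j$ in $\check G$ (zero if $j>n$).
   Context: $\mathrm{Ind}(G)$ is the simplicial complex of independent sets of $G$. If $G$ is bipartite and $\mathrm{Ind}(G)$ is Cohen-Macaulay, there is a tri-partition $X=\{x_1,\ldots,x_n\}$, $Y=\{y_1,\ldots,y_n\}$, $Z=\{z_1,\ldots,z_m\}$ of its vertices with: (1) $Z$ is exactly the set of isolated vertices; (2) $X$, $Y$ are independent, $x_iy_i$ is an edge for all $i$, and whenever $x_iy_j$, $x_jy_k$ are edges with $i,j,k$ distinct, $x_iy_k$ is an edge; (3) $x_iy_j$ an edge implies $i\le j$. The compression of $G$ (with respect to such a tri-partition) is the graph $\check G$ with vertex set $X$ and edge set $\{x_ix_j : i<j,\ x_iy_j \text{ is an edge of } G\}$. For a $(d-1)$-dimensional complex with face numbers $f_{i-1}$ (number of faces with $i$ elements), the $h$-vector is $h_j=\sum_{i=0}^{j}(-1)^{j-i}\binom{d-i}{j-i}f_{i-1}$, $0\le j\le d$; here $d=n+m$. *)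

(* Defs.v *)
From HB Require Import structures.
From mathcomp Require Import all_boot all_order all_algebra.
Set Implicit Arguments. Unset Strict Implicit. Unset Printing Implicit Defensive.
Import Order.TTheory GRing.Theory Num.Theory.

Section Defs.
Variable V : finType.

Definition indep (e : rel V) (S : {set V}) : bool :=
  [forall u in S, forall v in S, ~~ e u v].

Definition Ind (e : rel V) : {set {set V}} := [set S | indep e S].

Definition faces (K : {set {set V}}) (k : nat) : {set {set V}} :=
  [set s in K | #|s| == k].

(* f_{k-1}(K) = number of faces with k elements *)
Definition fnum (K : {set {set V}}) (k : nat) : nat := #|faces K k|.

(* h-vector entry h_j for a complex with d = dim + 1 :
   h_j = sum_{i=0}^{j} (-1)^(j-i) C(d-i, j-i) f_{i-1} *)
Definition hvec (d : nat) (K : {set {set V}}) (j : nat) : int :=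
  (\sum_(i < j.+1) (-1) ^+ (j - i) * ('C(d - i, j - i))%:Z * (fnum K i)%:Z)%R.

(* simplicial boundary matrix from the faces with k+1 elements to the faces
   with k elements (vertices ordered by enum_rank); includes the augmentation
   (k = 0), so it computes reduced homology *)
Definition bdry (F : fieldType) (K : {set {set V}}) (k : nat)
  : 'M[F]_(#|faces K k.+1|, #|faces K k|) :=
  \matrix_(a < #|faces K k.+1|, b < #|faces K k|)
    (let s : {set V} := enum_val a in let t : {set V} := enum_val b in
     if t \subset s then
       \sum_(v in s :\: t) (-1) ^+ #|[set u in s | (enum_rank u < enum_rank v)%N]|
     else 0)%R.

(* dimension over F of the reduced homology group in dimension k-1
   (i.e. built on the faces with k elements) *)
Definition rbetti (F : fieldType) (K : {set {set V}}) (k : nat) : nat :=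
  (#|faces K k| - (if k is k'.+1 then \rank (bdry F K k') else 0)
     - \rank (bdry F K k))%N.

Definition link (K : {set {set V}}) (s : {set V}) : {set {set V}} :=
  [set t in K | [disjoint t & s] && (t :|: s \in K)].

(* dim K + 1 = largest number of elements of a face *)
Definition maxsize (K : {set {set V}}) : nat := \max_(t in K) #|t|.

(* Cohen-Macaulay over F, via Reisner's criterion: for every face s and every
   i < dim lk s, reduced homology H~_i(lk s; F) vanishes. *)
Definition CohenMacaulay (F : fieldType) (K : {set {set V}}) : Prop :=
  forall s, s \in K -> forall k, (k < maxsize (link K s))%N ->
    rbetti F (link K s) k = 0%N.

End Defs.

Definition simple_graph (V : finType) (e : rel V) : Prop :=
  symmetric e /\ irreflexive e.

Definition bipartite (V : finType) (e : rel V) : Prop :=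
  exists c : V -> bool, forall u v, e u v -> c u != c v.

(* x : 'I_n -> V, y : 'I_n -> V, z : 'I_m -> V form a tri-partition of V
   satisfying (1)-(3); indices are 0-based. *)
Definition good_tripartition (V : finType) (e : rel V) (n m : nat)
  (x y : 'I_n -> V) (z : 'I_m -> V) : Prop :=
  (injective x /\ injective y /\ injective z /\
   (forall i j, x i <> y j) /\ (forall i k, x i <> z k) /\
   (forall j k, y j <> z k) /\
   forall v, (exists i, v = x i) \/ (exists i, v = y i) \/ (exists k, v = z k))
  /\
  (forall v, (exists k, v = z k) <-> (forall w, ~~ e v w))
  /\
  [/\ (forall i j, ~~ e (x i) (x j)), (forall i j, ~~ e (y i) (y j)),
      (forall i, e (x i) (y i))
    & forall i j k, i != j -> j != k -> i != k ->
        e (x i) (y j) -> e (x j) (y k) -> e (x i) (y k)]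
  /\
  (forall i j, e (x i) (y j) -> (i <= j)%N).

(* compression: vertex set X (indexed by 'I_n), edge x_i x_j (i<j) iff x_i y_j in G *)
Definition compression (V : finType) (e : rel V) (n : nat) (x y : 'I_n -> V)
  : rel 'I_n :=
  fun i j => ((i < j)%N && e (x i) (y j)) || ((j < i)%N && e (x j) (y i)).

(* Main.v *)
From Stdlib Require Import Arith ArithRing Lia.
From HB Require Import structures.
From mathcomp Require Import all_boot all_order all_algebra.
Require Import Defs.
Set Implicit Arguments. Unset Strict Implicit. Unset Printing Implicit Defensive.

Section Comb.
Variables (V : finType) (e : rel V) (n m : nat) (x y : 'I_n -> V) (z : 'I_m -> V).
Hypothesis esy : symmetric e.
Hypothesis xinj : injective x.
Hypothesis yinj : injective y.
Hypothesis zinj : injective z.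
Hypothesis xy : forall i j, x i <> y j.
Hypothesis xz : forall i k, x i <> z k.
Hypothesis yz : forall j k, y j <> z k.
Hypothesis cover : forall v, (exists i, v = x i) \/ (exists i, v = y i) \/ (exists k, v = z k).
Hypothesis zIso : forall k w, ~~ e (z k) w.
Hypothesis xx : forall i j, ~~ e (x i) (x j).
Hypothesis yy : forall i j, ~~ e (y i) (y j).
Hypothesis xyii : forall i, e (x i) (y i).
Hypothesis etr : forall i j k, i != j -> j != k -> i != k ->
        e (x i) (y j) -> e (x j) (y k) -> e (x i) (y k).
Hypothesis upper : forall i j, e (x i) (y j) -> (i <= j)%N.

Definition le i j := e (x i) (y j).
Lemma le_refl i : le i i. Proof. exact: xyii. Qed.
Lemma le_anti i j : le i j -> le j i -> i = j.
Proof. by move=> /upper h1 /upper h2; apply: val_inj; apply/eqP; rewrite eqn_leq h1 h2. Qed.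
Lemma le_trans i j k : le i j -> le j k -> le i k.
Proof.
move=> h1 h2.
case: (eqVneq i j) => [->//|ij]; case: (eqVneq j k) => [<-//|jk].
case: (eqVneq i k) => [->|ik]; first exact: le_refl.
exact: etr h1 h2.
Qed.

Definition antichain (M : {set 'I_n}) := [forall u in M, forall v in M, le u v ==> (u == v)].
Definition downs := locked (fun M : {set 'I_n} => [set i | [exists j in M, le i j]]).
Definition maxs := locked (fun B : {set 'I_n} => [set j in B | [forall k in B, le j k ==> (k == j)]]).
Definition Zs := [set z k | k : 'I_m].
Definition UU (M : {set 'I_n}) := x @: (~: M) :|: Zs.
Definition xA (S : {set V}) := [set i | x i \in S].
Definition yB (S : {set V}) := [set i | y i \in S].
Definition phi (S : {set V}) : {set 'I_n} * {set V} :=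
  (maxs (yB S), x @: (xA S :|: (yB S :\: maxs (yB S))) :|: (S :&: Zs)).
Definition psi (p : {set 'I_n} * {set V}) : {set V} :=
  let W := [set i | x i \in p.2] in
  x @: (W :\: downs p.1) :|: y @: (p.1 :|: (W :&: downs p.1)) :|: (p.2 :&: Zs).

Lemma mxx i (A : {set 'I_n}) : (x i \in x @: A) = (i \in A). Proof. exact: mem_imset. Qed.
Lemma myy i (A : {set 'I_n}) : (y i \in y @: A) = (i \in A). Proof. exact: mem_imset. Qed.
Lemma mxy i (A : {set 'I_n}) : (x i \in y @: A) = false.
Proof. by apply/imsetP => -[j _ E]; apply: (xy E). Qed.
Lemma myx i (A : {set 'I_n}) : (y i \in x @: A) = false.
Proof. by apply/imsetP => -[j _ E]; apply: (xy (esym E)). Qed.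
Lemma mzx k (A : {set 'I_n}) : (z k \in x @: A) = false.
Proof. by apply/imsetP => -[j _ E]; apply: (xz (esym E)). Qed.
Lemma mzy k (A : {set 'I_n}) : (z k \in y @: A) = false.
Proof. by apply/imsetP => -[j _ E]; apply: (yz (esym E)). Qed.
Lemma mxZ i : (x i \in Zs) = false.
Proof. by apply/imsetP => -[j _ E]; apply: (xz E). Qed.
Lemma myZ i : (y i \in Zs) = false.
Proof. by apply/imsetP => -[j _ E]; apply: (yz E). Qed.
Lemma mzZ k : (z k \in Zs). Proof. exact: imset_f. Qed.

Definition msimp := (mxx, myy, mxy, myx, mzx, mzy, mxZ, myZ, mzZ).

Ltac bsimp := rewrite ?orbF ?orFb ?andbF ?andFb ?andbT ?andTb ?orbT ?orTb.
Ltac simpm := do 4 (rewrite ?inE ?msimp /=; do 3 bsimp).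

Lemma indep_le S a b : indep e S -> x a \in S -> y b \in S -> ~~ le a b.
Proof.
move=> /forallP/(_ (x a))/implyP h xa yb.
by move: (forallP (h xa) (y b)) => /implyP; apply.
Qed.

Lemma indep_mk (A B : {set 'I_n}) R : (forall a b, a \in A -> b \in B -> ~~ le a b) ->
  indep e (x @: A :|: y @: B :|: (R :&: Zs)).
Proof.
move=> H; apply/forallP => u; apply/implyP => uS; apply/forallP => v; apply/implyP => vS.
have [[i E1]|[[i E1]|[k E1]]] := cover u; subst u; last exact: zIso.
  all: have [[j E]|[[j E]|[k E]]] := cover v; subst v; try (by rewrite esy zIso).
- exact: xx.
- move: uS vS; simpm => ia jb; exact: H.
- move: uS vS; simpm => ia jb; rewrite esy; exact: H.
- exact: yy.
Qed.

Lemma cardU0 (T : finType) (A B : {set T}) : A :&: B = set0 -> #|A :|: B| = #|A| + #|B|.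
Proof. by move=> h; rewrite -cardsUI h cards0 addn0. Qed.

Lemma inmaxs (B : {set 'I_n}) j : (j \in maxs B) = (j \in B) && [forall k in B, le j k ==> (k == j)].
Proof. by rewrite /maxs -lock inE. Qed.
Lemma indowns (M : {set 'I_n}) i : (i \in downs M) = [exists j in M, le i j].
Proof. by rewrite /downs -lock inE. Qed.
Lemma maxsB (B : {set 'I_n}) j : j \in maxs B -> j \in B.
Proof. by rewrite inmaxs => /andP[]. Qed.
Lemma downs_self (M : {set 'I_n}) j : j \in M -> j \in downs M.
Proof. by move=> jM; rewrite indowns; apply/existsP; exists j; rewrite jM le_refl. Qed.

Lemma down_max (B : {set 'I_n}) i : i \in B -> i \in downs (maxs B).
Proof.
move=> iB.
have P0 : (i \in B) && le i i by rewrite iB le_refl.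
case: (@arg_maxnP _ i (fun k => (k \in B) && le i k) val P0) => k /andP[kB ik] kmax.
rewrite indowns; apply/existsP; exists k; rewrite ik andbT inmaxs kB /=.
apply/forallP => j; apply/implyP => jB; apply/implyP => kj.
have := kmax j; rewrite jB (le_trans ik kj) => /(_ isT) jk.
by apply/eqP; apply: val_inj; apply/eqP; rewrite eqn_leq (upper kj) andbT.
Qed.

Lemma antichain_maxs (B : {set 'I_n}) : antichain (maxs B).
Proof.
apply/forallP => u; apply/implyP => uM; apply/forallP => v; apply/implyP=> vM; apply/implyP => uv.
move: uM; rewrite inmaxs => /andP[_ /forallP/(_ v)]; rewrite (maxsB vM) /=.
by move=> /implyP/(_ uv); rewrite eq_sym.
Qed.

Lemma disjAB (S : {set V}) i : indep e S -> x i \in S -> y i \in S -> False.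
Proof. by move=> H a b; have := indep_le H a b; rewrite /le xyii. Qed.

Lemma notD (S : {set V}) i : indep e S -> x i \in S -> i \in downs (maxs (yB S)) -> False.
Proof.
move=> H xi; rewrite indowns => /existsP[j /andP[jM ij]].
have jB := maxsB jM; rewrite inE in jB.
by have := indep_le H xi jB; rewrite ij.
Qed.


Lemma psiphi (S : {set V}) : indep e S -> psi (phi S) = S.
Proof.
move=> H; apply/setP => v; rewrite /psi /phi /=.
have [[i ->]|[[i ->]|[k ->]]] := cover v; simpm.
- case xi: (x i \in S) => /=.
    by rewrite andbT; apply/negP => /(notD H xi).
  apply/negP => /andP[nD /andP[_ yi]].
  by have := @down_max (yB S) i; rewrite inE yi (negbTE nD) => /(_ isT).
- case yi: (y i \in S).
    case: (boolP (i \in maxs (yB S))) => //= iM.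
    by rewrite orbT /=; apply: down_max; rewrite inE.
  have iM : (i \in maxs (yB S)) = false by apply/negP => /maxsB; rewrite inE yi.
  rewrite iM /= orbF.
  case xi: (x i \in S) => //=.
  by apply/negP => /(notD H xi).
- by [].
Qed.

Lemma phi_sub (S : {set V}) : indep e S -> (phi S).2 \subset UU (phi S).1.
Proof.
move=> H; apply/subsetP => v; rewrite /phi /UU /=.
have [[i ->]|[[i ->]|[k ->]]] := cover v; simpm => //.
case/orP => [xi|/andP[]//]; apply/negP => /maxsB; rewrite inE => yi.
exact: disjAB H xi yi.
Qed.

Lemma S_dec (S : {set V}) : S = x @: xA S :|: y @: yB S :|: (S :&: Zs).
Proof.
apply/setP => v; have [[i ->]|[[i ->]|[k ->]]] := cover v; by simpm.
Qed.

Lemma card_dec (A B : {set 'I_n}) (R : {set V}) :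
  #|x @: A :|: y @: B :|: (R :&: Zs)| = #|A| + #|B| + #|R :&: Zs|.
Proof.
rewrite cardU0; last by apply/setP => v; have [[i ->]|[[i ->]|[k ->]]] := cover v; simpm.
rewrite cardU0; last by apply/setP => v; have [[i ->]|[[i ->]|[k ->]]] := cover v; simpm.
by rewrite !card_imset.
Qed.

Lemma phi_card (S : {set V}) : indep e S -> #|(phi S).1| + #|(phi S).2| = #|S|.
Proof.
move=> H; rewrite {3}(S_dec S) card_dec /phi /=.
rewrite cardU0; last by apply/setP => v; have [[i ->]|[[i ->]|[k ->]]] := cover v; simpm.
rewrite card_imset // cardU0; last first.
  apply/setP => i; rewrite !inE; apply/negP => /andP[xi /andP[_ yi]].
  exact: disjAB H xi yi.
rewrite -(cardsID (maxs (yB S)) (yB S)).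
have -> : yB S :&: maxs (yB S) = maxs (yB S) by apply/setIidPr/subsetP => i /maxsB.
set a := #|maxs _|; set b := #|xA S|; set c := #|_ :\: _|; set d := #|S :&: Zs|. by rewrite -!plusE; lia.
Qed.

Lemma xR_notM (M : {set 'I_n}) (R : {set V}) i : R \subset UU M -> x i \in R -> i \notin M.
Proof. by move=> /subsetP H /H; rewrite /UU; simpm. Qed.
Lemma yR (M : {set 'I_n}) (R : {set V}) i : R \subset UU M -> (y i \in R) = false.
Proof. by move=> /subsetP H; apply/negP => /H; rewrite /UU; simpm. Qed.

Lemma psi_indep (M : {set 'I_n}) (R : {set V}) : indep e (psi (M, R)).
Proof.
rewrite /psi /=; apply: indep_mk => a b; rewrite !inE => /andP[naD _] bB.
have bD : b \in downs M.
  by case/orP: bB => [/downs_self //|/andP[_ ->]].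
apply/negP => ab; move: naD; rewrite indowns; move: bD; rewrite indowns.
case/existsP => j /andP[jM bj] /existsP[]; exists j; rewrite jM.
exact: le_trans ab bj.
Qed.

Lemma psi_card (M : {set 'I_n}) (R : {set V}) : R \subset UU M -> #|psi (M, R)| = #|M| + #|R|.
Proof.
move=> RU; rewrite /psi /= card_dec.
rewrite cardU0; last first.
  apply/setP => i; rewrite !inE; apply/negP => /andP[iM /andP[xi _]].
  by move: (xR_notM RU xi); rewrite iM.
have ER : #|R| = #|[set i | x i \in R]| + #|R :&: Zs|.
  have RE : R = x @: [set i | x i \in R] :|: y @: set0 :|: (R :&: Zs).
    apply/setP => v; have [[i ->]|[[i ->]|[k ->]]] := cover v; simpm => //.
    by rewrite (yR _ RU).
  by rewrite {1}RE card_dec cards0 addn0.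
rewrite ER -(cardsID (downs M) [set i | x i \in R]).
set a := #|M|; set b := #|_ :&: downs M|; set c := #|_ :\: downs M|; set d := #|R :&: Zs|.
by rewrite -!plusE; lia.
Qed.

Lemma maxs_eq (M B : {set 'I_n}) : antichain M -> (forall b, b \in B -> b \in downs M) ->
  M \subset B -> maxs B = M.
Proof.
move=> AM BD /subsetP MB; apply/setP => j; rewrite inmaxs; apply/idP/idP.
  case/andP => jB /forallP H; move: (BD _ jB); rewrite indowns => /existsP[k /andP[kM jk]].
  by move: (H k); rewrite (MB _ kM) jk /= => /eqP <-.
move=> jM; rewrite (MB _ jM) /=; apply/forallP => k; apply/implyP => kB; apply/implyP => jk.
move: (BD _ kB); rewrite indowns => /existsP[k' /andP[k'M kk']].
have jk' := le_trans jk kk'.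
move: AM => /forallP/(_ j)/implyP/(_ jM)/forallP/(_ k')/implyP/(_ k'M)/implyP/(_ jk')/eqP Ejk.
subst k'; apply/eqP; exact: le_anti kk' jk.
Qed.

Lemma phipsi (M : {set 'I_n}) (R : {set V}) : antichain M -> R \subset UU M -> phi (psi (M, R)) = (M, R).
Proof.
move=> AM RU.
have EB : yB (psi (M, R)) = M :|: ([set i | x i \in R] :&: downs M).
  by apply/setP => i; rewrite /psi /=; simpm.
have EA : xA (psi (M, R)) = [set i | x i \in R] :\: downs M.
  by apply/setP => i; rewrite /psi /=; simpm.
have EM : maxs (yB (psi (M, R))) = M.
  rewrite EB; apply: maxs_eq => //; last exact: subsetUl.
  move=> b; rewrite !inE => /orP[/downs_self //|/andP[_ ->//]].
rewrite /phi EM; congr pair; rewrite EA EB.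
apply/setP => v; have [[i ->]|[[i ->]|[k ->]]] := cover v; rewrite /psi /=; simpm.
- case xi: (x i \in R); last by rewrite andbF /= andbC; case: (i \in M).
  rewrite (negbTE (xR_notM RU xi)) /=.
  by case: (i \in downs M).
- by rewrite (yR _ RU).
- by [].
Qed.

Definition Pset i := [set S : {set V} | indep e S && (#|S| == i)].
Definition Qset i := [set p : {set 'I_n} * {set V} |
   [&& antichain p.1, p.2 \subset UU p.1 & #|p.1| + #|p.2| == i]].

Lemma PQ i : #|Pset i| = #|Qset i|.
Proof.
have inj : {in Pset i &, injective phi}.
  move=> S1 S2; rewrite !inE => /andP[H1 _] /andP[H2 _] E.
  by rewrite -(psiphi H1) -(psiphi H2) E.
suff E : [set phi S | S in Pset i] = Qset i by rewrite -E (card_in_imset inj).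
apply/setP => p; apply/idP/idP.
  move=> /imsetP[S]; rewrite inE => /andP[H /eqP <-] ->.
  by rewrite inE antichain_maxs phi_sub // phi_card // eqxx.
case: p => M R; rewrite inE /= => /and3P[AM RU /eqP Hi].
apply/imsetP; exists (psi (M, R)); last by rewrite phipsi.
by rewrite inE psi_indep psi_card // Hi eqxx.
Qed.

Lemma card_UU (M : {set 'I_n}) : #|UU M| = n + m - #|M|.
Proof.
rewrite /UU cardU0; last by apply/setP => v; have [[i ->]|[[i ->]|[k ->]]] := cover v; simpm.
rewrite !card_imset // card_ord.
have := cardsC M; rewrite card_ord.
set a := #|M|; set c := #|~: M| => E.
clearbody a c; move: E; rewrite -!plusE -!minusE; lia.
Qed.

Lemma Qcount i : #|Qset i| =
  \sum_(M : {set 'I_n}) (antichain M && (#|M| <= i)) * 'C(n + m - #|M|, i - #|M|).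
Proof.
transitivity (\sum_(M : {set 'I_n}) \sum_(R : {set V}) ((M, R) \in Qset i : nat)).
  rewrite pair_big /= -sum1_card big_mkcond /=.
  by apply: eq_bigr => -[M R] _; case: (_ \in _).
apply: eq_bigr => M _.
rewrite -card_UU -cards_draws -[#|[set A | _]|]sum1_card big_distrr [RHS]big_mkcond /=.
apply: eq_bigr => R _; rewrite !inE /=.
case: (antichain M) => /=; last by case: ifP.
case: (leqP #|M| i) => h /=.
  by rewrite -[#|R| == _](eqn_add2l #|M|) subnKC //; case: ifP.
rewrite gtn_eqF ?andbF; first by case: ifP.
exact: (leq_trans h (leq_addr _ _)).
Qed.

Lemma indep_comp (M : {set 'I_n}) : indep (compression e x y) M = antichain M.
Proof.
apply/idP/idP.
  move=> /forallP H; apply/forallP => u; apply/implyP => uM; apply/forallP => v.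
  apply/implyP => vM; apply/implyP => uv.
  move: (forallP (implyP (H u) uM) v) => /implyP/(_ vM).
  rewrite /compression.
  case: (ltngtP u v) => h.
  - by move: uv; rewrite /le /= => ->.
  - by move: (upper uv); rewrite leqNgt h.
  - by move=> _; apply/eqP/val_inj.
move=> /forallP H; apply/forallP => u; apply/implyP => uM; apply/forallP => v.
apply/implyP => vM; rewrite /compression negb_or; apply/andP; split; apply/negP => /andP[lt l].
  move: (forallP (implyP (H u) uM) v) => /implyP/(_ vM)/implyP/(_ l)/eqP E.
  by move: lt; rewrite E ltnn.
move: (forallP (implyP (H v) vM) u) => /implyP/(_ uM)/implyP/(_ l)/eqP E.
by move: lt; rewrite E ltnn.
Qed.

Lemma main_count i : fnum (Ind e) i =
  \sum_(k < n.+1) (k <= i) * fnum (Ind (compression e x y)) k * 'C(n + m - k, i - k).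
Proof.
have -> : fnum (Ind e) i = #|Pset i| by apply: eq_card => S; rewrite !inE.
rewrite PQ Qcount.
transitivity (\sum_(k < n.+1) \sum_(M : {set 'I_n})
    ((antichain M && (#|M| == k)) * ((k <= i) * 'C(n+m-k, i-k)))); last first.
  apply: eq_bigr => k _; rewrite -big_distrl /=.
  have -> : fnum (Ind (compression e x y)) k = \sum_(M : {set 'I_n}) (antichain M && (#|M| == k)).
    rewrite /fnum -sum1_card big_mkcond /=; apply: eq_bigr => M _.
    by rewrite /faces /Ind !inE indep_comp; case: (_ && _).
  by rewrite mulnCA mulnA.
rewrite exchange_big /=; apply: eq_bigr => M _.
have hM : #|M| < n.+1 by rewrite ltnS; apply: leq_trans (max_card _) _; rewrite card_ord.
rewrite (bigD1 (Ordinal hM)) //= eqxx andbT big1 ?addn0.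
  by case: (antichain M); rewrite ?mul1n ?mul0n.
move=> k kne; have : #|M| != k.
  by apply: contra kne => /eqP E; apply/eqP/val_inj; rewrite /= E.
by move=> /negbTE ->; rewrite andbF mul0n.
Qed.

Lemma fnum_big k : (n.+1 <= k)%N -> fnum (Ind (compression e x y)) k = 0.
Proof.
move=> h; apply/eqP; rewrite cards_eq0; apply/eqP/setP => M; rewrite !inE.
have : #|M| <= n by apply: leq_trans (max_card _) _; rewrite card_ord.
move=> hM; rewrite ltn_eqF ?andbF //.
exact: leq_ltn_trans hM h.
Qed.

End Comb.


Ltac nring := rewrite -?multE -?plusE; match goal with |- ?a = ?b => change (@eq nat a b) end; ring.
Lemma trinom a b c : 'C(b+c,b) * 'C(a+b+c,a) = 'C(a+b+c,a+b) * 'C(a+b,a).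
Proof.
have K : 0 < a`! * b`! * c`! by rewrite !muln_gt0 !fact_gt0.
apply/eqP; rewrite -(eqn_pmul2r K); apply/eqP.
have E1 : 'C(b+c,b) * (b`! * c`!) = (b+c)`!.
  by rewrite -{2}(addKn b c) bin_fact // leq_addr.
have E2 : 'C(a+b+c,a) * (a`! * (b+c)`!) = (a+b+c)`!.
  by rewrite -addnA -{2}(addKn a (b+c)) bin_fact // leq_addr.
have E3 : 'C(a+b,a) * (a`! * b`!) = (a+b)`!.
  by rewrite -{2}(addKn a b) bin_fact // leq_addr.
have E4 : 'C(a+b+c,a+b) * ((a+b)`! * c`!) = (a+b+c)`!.
  by rewrite -{2}(addKn (a+b) c) bin_fact // leq_addr.
transitivity (a+b+c)`!.
  rewrite -E2 -E1. nring.
rewrite -E4 -E3. nring.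
Qed.
Lemma trinom2 k i j d : (k <= i)%N -> (i <= j)%N -> (j <= d)%N ->
  ('C(d-i,j-i) * 'C(d-k,i-k) = 'C(d-k,j-k) * 'C(j-k,i-k))%N.
Proof.
move=> /leP ki /leP ij /leP jd.
have := trinom (i - k) (j - i) (d - j).
have -> : (j - i + (d - j) = d - i)%N by rewrite -!plusE -!minusE; lia.
have -> : (i - k + (j - i) + (d - j) = d - k)%N by rewrite -!plusE -!minusE; lia.
have -> : (i - k + (j - i) = j - k)%N by rewrite -!plusE -!minusE; lia.
by [].
Qed.

Section Alg.
Import GRing.Theory Num.Theory.
Local Open Scope ring_scope.
Lemma alt (j k : nat) : (k <= j)%N ->
  \sum_(i < j.+1) (((k <= i)%N)%:Z * (-1)^+(j-i) * ('C(j-k,i-k))%:Z) = ((j == k)%N)%:Z.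
Proof.
move=> kj.
rewrite -(big_mkord xpredT (fun i => ((k <= i)%N)%:Z * (-1)^+(j-i) * ('C(j-k,i-k))%:Z)).
rewrite (big_cat_nat _ (n:=k)) //=; last by rewrite ltnW.
rewrite big_nat_cond big1 ?add0r; last first.
  by move=> i /andP[/andP[_ ik] _]; rewrite leqNgt ik mul0r.
rewrite -{1}(add0n k) big_addn.
have -> : (j.+1 - k = (j-k).+1)%N by rewrite subSn.
rewrite big_mkord.
have E : ((-1 + 1 : int) ^+ (j - k) = ((j == k)%N)%:Z).
  rewrite addNr expr0n subn_eq0 natz eqn_leq kj andbT //.
rewrite -E exprDn. apply: eq_bigr => i _.
by rewrite leq_addl mul1r expr1n mulr1 addnK addnC subnDA -mulr_natr natz.

Qed.

Lemma acr (R : comNzRingType) (s A B C D c : R) : A * B = C * D -> s * A * (c * B) = c * C * (s * D).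
Proof. move=> h. rewrite -mulrA (mulrCA A) h. by rewrite mulrCA -!mulrA (mulrCA s). Qed.

Lemma hinv (d K : nat) (c f : nat -> nat) :
  (forall k, (K <= k)%N -> c k = 0%N) ->
  (forall i, f i = \sum_(k < K) (k <= i) * c k * 'C(d - k, i - k))%N ->
  forall j, (j <= d)%N ->
  \sum_(i < j.+1) (-1) ^+ (j - i) * ('C(d - i, j - i))%:Z * (f i)%:Z = (c j)%:Z.
Proof.
move=> cK fE j jd.
under eq_bigr => i _ do rewrite fE -[(\sum_(k<K) _)%:Z]natz natr_sum mulr_sumr.
rewrite exchange_big /=.
under eq_bigr => k _.
  have -> : \sum_(i < j.+1) (-1) ^+ (j - i) * ('C(d - i, j - i))%:Z *
      ((k <= i) * c k * 'C(d - k, i - k))%N%:R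
    = ((c k * 'C(d-k, j-k))%N%:Z) * \sum_(i < j.+1) (((k <= i)%N)%:Z * (-1)^+(j-i) * ('C(j-k,i-k))%:Z).
    rewrite mulr_sumr; apply: eq_bigr => i _.
    case: (leqP k i) => ki; last by rewrite !mul0n !mulr0 mul0r mulr0.
    case: (leqP i j.+1) => ij; last first.
       by have := ltn_ord i; rewrite ltnNge ltnW.
    have ij' : (i <= j)%N by rewrite -ltnS; exact: ltn_ord.
    have := @trinom2 k i j d ki ij' jd.
    move=> T.
    rewrite /= !mul1n natz PoszM (_ : Posz true = 1) // mul1r PoszM.
    by apply: acr; rewrite -!PoszM T.
  over.
have H : forall k : 'I_K, (c k * 'C(d-k,j-k))%N%:Z *
   \sum_(i < j.+1) (((k <= i)%N)%:Z * (-1)^+(j-i) * ('C(j-k,i-k))%:Z) = ((nat_of_ord k == j) * c j)%N%:Z.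
  move=> k; case: (leqP k j) => kj.
    rewrite alt //; case: eqP => [->|nE]; first by rewrite eqxx subnn bin0 muln1 mulr1 mul1n.
    have -> : (k == j :> nat) = false by apply/eqP => E; apply: nE; rewrite E.
    by rewrite mulr0.
  rewrite big1 ?mulr0 ?gtn_eqF // => i _.
  by rewrite leqNgt (leq_trans (ltn_ord i) kj) mul0r.
rewrite (eq_bigr _ (fun k _ => H k)) -(big_morph Posz PoszD (erefl 0%:Z)); congr Posz.
case: (ltnP j K) => jK.
  rewrite (bigD1 (Ordinal jK)) //= eqxx mul1n big1 ?addn0 // => k /negbTE.
  by rewrite -val_eqE /= => ->.
rewrite cK // big1 // => k _.
by rewrite ltn_eqF ?mul0n // (leq_trans (ltn_ord k) jK).
Qed.

End Alg.

Theorem proposition4p11 (F : fieldType) (V : finType) (e : rel V)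
  (n m : nat) (x y : 'I_n -> V) (z : 'I_m -> V) :
  simple_graph e -> bipartite e ->
  CohenMacaulay F (Ind e) ->
  good_tripartition e x y z ->
  forall j : nat, (j <= n + m)%N ->
    hvec (n + m) (Ind e) j = ((fnum (Ind (compression e x y)) j)%:Z)%R.
Proof.
move=> [esy _] _ _ [[xinj [yinj [zinj [xy [xz [yz cover]]]]]] [Z1 [[xx yy xyii etr] upper]]] j jd.
have zIso : forall k w, ~~ e (z k) w by move=> k; apply/(Z1 (z k)).1; exists k.
rewrite /hvec.
apply: (@hinv (n + m) n.+1 (fun k => fnum (Ind (compression e x y)) k) (fun i => fnum (Ind e) i)) => //.
- by move=> k; apply: fnum_big.
- by move=> i; apply: (main_count esy xinj yinj zinj xy xz yz cover zIso xx yy xyii etr upper).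
Qed.
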